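(* Let $\mathcal{A}$ be any simply closed set of Left dead-ends. Then $\mathcal{D}(\mathcal{A})\cap\mathcal{L}=\mathcal{A}$.
   Context: Games are finite partizan games. A universe is a set of games closed under options, disjunctive sums, conjugates, and forming $\{\mathscr{G}^L\mid\mathscr{G}^R\}$ from nonempty finite subsets of it; $\mathcal{D}(\mathcal{A})$ is the smallest universe containing $\mathcal{A}$. A set is simply closed if it is closed under taking options and under disjunctive sums. A Left dead-end is a game all of whose subpositions have no Left option; $\mathcal{L}$ is the set of Left dead-ends. *)

(* Defs.v *)
From Stdlib Require Import List.
Import ListNotations.

Inductive game : Type :=
  | Game : list game -> list game -> game.

Definition lefts (g : game) : list game := let (l, _) := g in l.
Definition rights (g : game) : list game := let (_, r) := g in r.

Fixpoint conj (g : game) : game :=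
  match g with
  | Game l r => Game (map conj r) (map conj l)
  end.

(* Disjunctive sum: G + H = { G^L + H, G + H^L | G^R + H, G + H^R }. *)
Fixpoint add (g h : game) {struct g} : game :=
  let fix addh (h : game) : game :=
    match g, h with
    | Game gl gr, Game hl hr =>
        Game (map (fun x => add x h) gl ++ map addh hl)
             (map (fun x => add x h) gr ++ map addh hr)
    end in
  addh h.

Definition is_option (h g : game) : Prop := In h (lefts g) \/ In h (rights g).

Inductive subpos : game -> game -> Prop :=
  | subpos_refl g : subpos g g
  | subpos_opt h g k : is_option h g -> subpos k h -> subpos k g.

Definition left_dead_end (g : game) : Prop :=
  forall h, subpos h g -> lefts h = nil.

Definition simply_closed (A : game -> Prop) : Prop :=
  (forall g h, A g -> is_option h g -> A h) /\
  (forall g h, A g -> A h -> A (add g h)).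

Definition universe (U : game -> Prop) : Prop :=
  (forall g h, U g -> is_option h g -> U h) /\
  (forall g h, U g -> U h -> U (add g h)) /\
  (forall g, U g -> U (conj g)) /\
  (forall l r, l <> nil -> r <> nil -> Forall U l -> Forall U r -> U (Game l r)).

Definition Dclos (A : game -> Prop) (g : game) : Prop :=
  forall U, universe U -> (forall x, A x -> U x) -> U g.

(* Main.v *)
Require Import Defs.
From Stdlib Require Import List.
Import ListNotations.

Definition game_ind' (P : game -> Prop)
  (H : forall l r, Forall P l -> Forall P r -> P (Game l r)) : forall g, P g :=
  fix F g := match g with
  | Game l r =>
      H l r
        ((fix G (l : list game) : Forall P l :=
            match l with nil => Forall_nil _ | x :: t => Forall_cons _ (F x) (G t) end) l)
        ((fix G (l : list game) : Forall P l :=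
            match l with nil => Forall_nil _ | x :: t => Forall_cons _ (F x) (G t) end) r)
  end.

Lemma add_eq gl gr hl hr : add (Game gl gr) (Game hl hr) =
  Game (map (fun x => add x (Game hl hr)) gl ++ map (add (Game gl gr)) hl)
       (map (fun x => add x (Game hl hr)) gr ++ map (add (Game gl gr)) hr).
Proof. reflexivity. Qed.

Lemma map_id_Forall (f : game -> game) l : Forall (fun x => f x = x) l -> map f l = l.
Proof. induction 1; simpl; congruence. Qed.

Lemma conj_conj g : conj (conj g) = g.
Proof.
  induction g using game_ind'; simpl; rewrite !map_map, !map_id_Forall; auto.
Qed.

Lemma conj_add g : forall h, conj (add g h) = add (conj g) (conj h).
Proof.
  induction g as [gl gr IGl IGr] using game_ind'.
  intro h; induction h as [hl hr IHl IHr] using game_ind'.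
  rewrite add_eq. simpl conj. rewrite add_eq.
  rewrite !map_app, !map_map. f_equal; f_equal; apply map_ext_Forall.
  - eapply Forall_impl; [|exact IGr]. intros x Hx; simpl in Hx. rewrite Hx. reflexivity.
  - eapply Forall_impl; [|exact IHr]. intros x Hx; simpl in Hx. exact Hx.
  - eapply Forall_impl; [|exact IGl]. intros x Hx; simpl in Hx. rewrite Hx. reflexivity.
  - eapply Forall_impl; [|exact IHl]. intros x Hx; simpl in Hx. exact Hx.
Qed.

Lemma subpos_trans a b c : subpos a b -> subpos b c -> subpos a c.
Proof. intros H1 H2; revert a H1; induction H2; intros; eauto using subpos. Qed.

Lemma option_add k g h : is_option k (add g h) ->
  (exists g', is_option g' g /\ k = add g' h) \/ (exists h', is_option h' h /\ k = add g h').
Proof.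
  destruct g as [gl gr], h as [hl hr]; rewrite add_eq; unfold is_option; simpl.
  rewrite !in_app_iff, !in_map_iff.
  intros [[[x [? ?]]|[x [? ?]]]|[[x [? ?]]|[x [? ?]]]]; subst;
    [left|right|left|right]; exists x; split; auto.
Qed.

Lemma subpos_add k g h : subpos k (add g h) ->
  exists g' h', subpos g' g /\ subpos h' h /\ k = add g' h'.
Proof.
  intro H; remember (add g h) as s; revert g h Heqs; induction H; intros; subst.
  - exists g0, h; repeat split; constructor.
  - destruct (option_add _ _ _ H) as [[g' [Ho E]]|[h' [Ho E]]];
      destruct (IHsubpos _ _ E) as [a [b [? [? ?]]]]; exists a, b; repeat split; auto;
      eapply subpos_trans; eauto; eapply subpos_opt; eauto; constructor.
Qed.

Lemma subpos_addl g' g h : subpos g' g -> subpos (add g' h) (add g h).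
Proof.
  induction 1. constructor.
  eapply subpos_opt; [|exact IHsubpos].
  destruct g as [gl gr], h as [hl hr]; rewrite add_eq; destruct H as [H|H];
    [left|right]; simpl; apply in_app_iff; left; apply in_map_iff; eauto.
Qed.

Lemma subpos_addr h' g h : subpos h' h -> subpos (add g h') (add g h).
Proof.
  induction 1. constructor.
  eapply subpos_opt; [|exact IHsubpos].
  destruct g as [gl gr], g0 as [hl hr]; rewrite add_eq; destruct H as [H|H];
    [left|right]; simpl; apply in_app_iff; right; apply in_map_iff; eauto.
Qed.

Lemma lefts_add_nil g h : lefts (add g h) = nil -> lefts g = nil /\ lefts h = nil.
Proof.
  destruct g as [gl gr], h as [hl hr]; rewrite add_eq; simpl; intro E.
  apply app_eq_nil in E as [E1 E2]. apply map_eq_nil in E1, E2. subst; auto.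
Qed.

Lemma lde_add g h : left_dead_end (add g h) -> left_dead_end g /\ left_dead_end h.
Proof.
  intro H; split; intros k Hk.
  - apply (lefts_add_nil k h), H, subpos_addl, Hk.
  - apply (lefts_add_nil g k), H, subpos_addr, Hk.
Qed.

Lemma subpos_conj k g : subpos k (conj g) -> exists k', subpos k' g /\ k = conj k'.
Proof.
  intro H; remember (conj g) as s; revert g Heqs; induction H; intros; subst.
  - exists g0; split; auto; constructor.
  - assert (exists g', is_option g' g0 /\ h = conj g') as [g' [Ho E]].
    { destruct g0 as [l r]; unfold is_option in *; simpl in *.
      rewrite !in_map_iff in H. destruct H as [[x [? ?]]|[x [? ?]]]; eauto. }
    destruct (IHsubpos _ E) as [a [? ?]]; exists a; split; auto.
    eapply subpos_trans; eauto; eapply subpos_opt; eauto; constructor.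
Qed.

Definition U (A : game -> Prop) (g : game) : Prop :=
  forall h, subpos h g -> (left_dead_end h -> A h) /\ (left_dead_end (conj h) -> A (conj h)).

Theorem mainTheorem11 (A : game -> Prop) :
  simply_closed A ->
  (forall g, A g -> left_dead_end g) ->
  forall g, (Dclos A g /\ left_dead_end g) <-> A g.
Proof.
  intros [HAo HAa] HAl g; split.
  - intros [HD HL].
    assert (HU : U A g).
    { apply HD.
      - split; [|split; [|split]].
        + intros x y Hx Ho k Hk. apply Hx. eapply subpos_opt; eauto.
        + intros x y Hx Hy k Hk. destruct (subpos_add _ _ _ Hk) as [a [b [Ha [Hb E]]]]; subst.
          destruct (Hx _ Ha) as [Ha1 Ha2], (Hy _ Hb) as [Hb1 Hb2]. split.
          * intro L; destruct (lde_add _ _ L); auto.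
          * rewrite conj_add; intro L; destruct (lde_add _ _ L); auto.
        + intros x Hx k Hk. destruct (subpos_conj _ _ Hk) as [a [Ha E]]; subst.
          destruct (Hx _ Ha) as [H1 H2]. rewrite conj_conj. tauto.
        + intros l r Hl Hr Fl Fr k Hk. inversion Hk; subst.
          * split; intro L; specialize (L _ (subpos_refl _)); simpl in L.
            -- contradiction.
            -- apply map_eq_nil in L; contradiction.
          * destruct H as [H|H]; simpl in H.
            -- rewrite Forall_forall in Fl; apply (Fl _ H); auto.
            -- rewrite Forall_forall in Fr; apply (Fr _ H); auto.
      - unfold U; intros x Hx k Hk.
        assert (Ak : A k).
        { clear HD HL; induction Hk; auto. apply IHHk. eapply HAo; eauto. }
        split; auto. intro L.
        assert (k = Game nil nil) as ->.
        { destruct k as [l r]. pose proof (HAl _ Ak _ (subpos_refl _)) as E1.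
          pose proof (L _ (subpos_refl _)) as E2. simpl in E1, E2.
          apply map_eq_nil in E2. subst; reflexivity. }
        exact Ak. }
    apply (HU g (subpos_refl _)); auto.
  - intro Hg; split; auto. intros U' _ HU'; auto.
Qed.
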